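(* Let $\Gamma$ be a connected finite simple graph on $N\ge3$ vertices with $\varepsilon>\frac12$. Then: (1) if $u\ne w$ are vertices with $\deg u=\deg w=1$, there is no vertex $v$ with $u\sim v\sim w$; (2) there are no three distinct vertices $u\sim v\sim w$ with $\deg u,\deg v,\deg w\in\{1,2\}$.
   Context: For a finite simple graph $\Gamma=(V,E)$ without isolated vertices, $\deg v$ is the number of neighbours of $v$ and $\mathcal N(v)=\{w\in V: w\sim v\}$. The normalized Laplacian acts on functions $f:V\to\mathbb R$ by $\Delta f(v)=f(v)-\frac{1}{\deg v}\sum_{w\sim v}f(w)$; its eigenvalues are $0=\lambda_1\le\lambda_2\le\dots\le\lambda_N$, and $\varepsilon:=\min_i|1-\lambda_i|$. *)

(* Defs.v *)
From HB Require Import structures.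
From mathcomp Require Import all_boot all_order all_algebra.
From mathcomp Require Import reals.
Set Implicit Arguments. Unset Strict Implicit. Unset Printing Implicit Defensive.
Import Order.TTheory GRing.Theory Num.Theory.
Local Open Scope ring_scope.

Definition simple_graph (n : nat) (e : rel 'I_n) : Prop :=
  symmetric e /\ irreflexive e.

Definition connected_graph (n : nat) (e : rel 'I_n) : Prop :=
  forall x y : 'I_n, connect e x y.

Definition deg (n : nat) (e : rel 'I_n) (v : 'I_n) : nat := #|[set w | e v w]|.

(* Matrix of the normalized Laplacian:
   (Delta f)(v) = f(v) - (1/deg v) * sum_{w ~ v} f(w). *)
Definition norm_laplacian (R : realType) (n : nat) (e : rel 'I_n) : 'M[R]_n :=
  \matrix_(i, j) ((i == j)%:R - (e i j)%:R / (deg e i)%:R).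

(* "epsilon > c" where epsilon = min_i |1 - lambda_i| over the eigenvalues
   of the normalized Laplacian (all real, as Delta is similar to a symmetric
   matrix), i.e. every eigenvalue lambda satisfies c < |1 - lambda|. *)
Definition eps_gt (R : realType) (n : nat) (e : rel 'I_n) (c : R) : Prop :=
  forall lam : R, eigenvalue (norm_laplacian R e) lam -> c < `|1 - lam|.

(* Main.v *)
Require Import Defs.
From HB Require Import structures.
From mathcomp Require Import all_boot all_order all_algebra.
From mathcomp Require Import reals complex ring lra.
Import Order.TTheory GRing.Theory Num.Theory.
Local Open Scope ring_scope.

Section Spec.
Local Open Scope sesquilinear_scope.
Lemma dot_sum (C : numClosedFieldType) n (w : 'rV[C]_n) :
  (w *m w^t*) 0 0 = \sum_k `|w 0 k| ^+ 2.
Proof.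
rewrite !mxE; apply: eq_bigr => k _; by rewrite !mxE normCK.
Qed.

Lemma specC (C : numClosedFieldType) n (A : 'M[C]_n) (c : C) (y : 'rV[C]_n) :
  A \is hermsymmx -> 0 <= c ->
  (forall a, eigenvalue A a -> a \is Num.real -> c < `|a|) ->
  y != 0 ->
  c ^+ 2 * (y *m y^t*) 0 0 < ((y *m A) *m (y *m A)^t*) 0 0.
Proof.
move=> Ah c0 Hev y0.
set U := spectralmx A; set D := spectral_diag A.
have hA : A = invmx U *m diag_mx D *m U.
  exact/orthomx_spectralP/hermitian_normalmx.
have Uu : U \is unitarymx by apply: spectral_unitarymx.
have Dr : D \is a realmx by apply: hermitian_spectral_diag_real.
have iU : invmx U = U^t* by apply: invmx_unitary.
have Uunit : U \in unitmx by apply: unitarymx_unit.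
have hk : forall k, c < `|D 0 k|.
  move=> k; apply: Hev; last by move/mxOverP: Dr; apply.
  apply/eigenvalueP; exists (row k U).
    rewrite -row_mul {1}hA !mulmxA mulmxV // mul1mx.
    apply/rowP => j; rewrite !mxE (bigD1 k) //= big1 ?addr0; last first.
      by move=> i /negbTE ik; rewrite !mxE eq_sym ik mulr0n mul0r.
    by rewrite !mxE eqxx mulr1n.
  apply/eqP => h.
  have : row k (U *m invmx U) = 0 by rewrite row_mul h mul0mx.
  rewrite mulmxV // => /rowP /(_ k); rewrite !mxE eqxx => /eqP.
  by rewrite oner_eq0.
set z := y *m U^t*.
have yz : y = z *m U by rewrite /z mulmxKtV.
have z0 : z != 0.
  by apply: contraNneq y0 => hz; rewrite yz hz mul0mx.
have e1 : (y *m y^t*) 0 0 = (z *m z^t*) 0 0.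
  by rewrite yz trmx_mul map_mxM mulmxA mulmxtVK.
have e2 : (y *m A) *m (y *m A)^t* = (z *m diag_mx D) *m (z *m diag_mx D)^t*.
  rewrite yz hA iU !mulmxA mulmxtVK //.
  by rewrite trmx_mul map_mxM mulmxA mulmxtVK.
rewrite e1 e2 !dot_sum mulr_sumr.
have [k zk] : exists k, z 0 k != 0.
  case: (pickP (fun k => z 0 k != 0)) => [k zk|h]; first by exists k.
  case/eqP: z0; apply/rowP => j; move/negbT: (h j); rewrite negbK => /eqP ->; by rewrite mxE.
rewrite (bigD1 k) //= [X in _ < X](bigD1 k) //=.
have ck : forall j, c ^+ 2 <= `|D 0 j| ^+ 2.
  by move=> j; rewrite lerXn2r ?nnegrE ?normr_ge0 // ltW.
have hzD : forall j, (z *m diag_mx D) 0 j = z 0 j * D 0 j.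
  by move=> j; rewrite mul_mx_diag mxE.
apply: ltr_leD.
  rewrite hzD normrM exprMn [X in _ < X]mulrC ltr_pM2r //.
    by rewrite ltrXn2r ?nnegrE ?normr_ge0.
  by rewrite exprn_gt0 // normr_gt0.
apply: ler_sum => j _; rewrite hzD normrM exprMn [X in _ <= X]mulrC.
by rewrite ler_wpM2r // exprn_ge0.
Qed.

Lemma specR (R : realType) n (S : 'M[R]_n) (c : R) (y : 'rV[R]_n) :
  S^T = S -> 0 <= c -> (forall a, eigenvalue S a -> c < `|a|) -> y != 0 ->
  c ^+ 2 * (y *m y^T) 0 0 < ((y *m S) *m (y *m S)^T) 0 0.
Proof.
move=> hS c0 Hev y0.
pose f := real_complex R.
have conjf : forall m p (M : 'M[R]_(m,p)), (map_mx f M)^t* = map_mx f (M^T).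
  move=> m p M; apply/matrixP => i j; rewrite !mxE conj_Creal //.
  by apply/complex_realP; eexists.
have := @specC _ _ (map_mx f S) (c%:C)%C (map_mx f y).
have mE : forall M : 'M[R]_1, (map_mx f M) 0 0 = f (M 0 0) by move=> M; rewrite mxE.
rewrite -map_mxM !conjf -!map_mxM !mE -rmorphXn -rmorphM ltcR; apply.
- by apply/is_hermitianmxP; rewrite expr0 scale1r conjf hS.
- by rewrite ler0c.
- move=> a ha /complex_realP [k ak]; subst a.
  rewrite eigenvalue_root_char -map_char_poly fmorph_root -eigenvalue_root_char in ha.
  rewrite normc_def /= expr0n addr0 sqrtr_sqr ltcR; exact: Hev.
- apply: contraNneq y0 => h; apply/eqP/matrixP => i j; have := congr1 (fun M : 'M[R[i]]_(1,n) => M i j) h; rewrite !mxE; exact: complexI.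
Qed.
End Spec.
Lemma sum2 (R : realType) n (G : 'I_n -> R) u w : u != w ->
  (forall i, i != u -> i != w -> G i = 0) -> \sum_i G i = G u + G w.
Proof.
move=> uw hG; rewrite (bigD1 u) //= (bigD1 w) 1?eq_sym //= big1 ?addr0 //.
by move=> i /andP [iu iw]; apply: hG.
Qed.

Lemma key (R : realType) n (e : rel 'I_n) (u w : 'I_n) (a b : R) :
  symmetric e -> (forall j, (0 < deg e j)%N) -> eps_gt e (2^-1 : R) ->
  u != w -> a != 0 ->
  2^-1 ^+ 2 * (a ^+ 2 * (deg e u)%:R + b ^+ 2 * (deg e w)%:R) <
  \sum_j (a * (e u j)%:R + b * (e w j)%:R) ^+ 2 / (deg e j)%:R.
Proof.
move=> esym dpos heps uw a0.
pose d i : R := (deg e i)%:R.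
have d0 : forall i, 0 < d i by move=> i; rewrite ltr0n.
pose sq i := Num.sqrt (d i).
have sq0 : forall i, 0 < sq i by move=> i; rewrite sqrtr_gt0.
have sqd : forall i, sq i ^+ 2 = d i by move=> i; rewrite sqr_sqrtr // ltW.
pose S : 'M[R]_n := \matrix_(i, j) ((e i j)%:R / (sq i * sq j)).
have ST : S^T = S by apply/matrixP => i j; rewrite !mxE esym [sq j * _]mulrC.
pose P : 'M[R]_n := \matrix_(i, j) ((e i j)%:R / d i).
have LP : norm_laplacian R e = 1%:M - P.
  by apply/matrixP => i j; rewrite !mxE.
have Hev : forall mu, eigenvalue S mu -> 2^-1 < `|mu|.
  move=> mu /eigenvalueP [v vS v0].
  have := heps (1 - mu); rewrite (_ : 1 - (1 - mu) = mu); last by rewrite opprB addrC subrK. apply.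
  apply/eigenvalueP; exists (\row_i (v 0 i * sq i)); last first.
    apply: contraNneq v0 => h; apply/eqP/rowP => k.
    have := congr1 (fun M : 'rV[R]_n => M 0 k) h; rewrite !mxE => /eqP.
    by rewrite mulf_eq0 (gt_eqF (sq0 k)) orbF => /eqP.
  rewrite LP mulmxBr mulmx1 scalerBl scale1r; congr (_ - _).
  apply/rowP => j; rewrite !mxE.
  have := congr1 (fun M : 'rV[R]_n => M 0 j) vS; rewrite !mxE => h.
  rewrite mulrA -h mulr_suml; apply: eq_bigr => i _; rewrite !mxE -(sqd i).
  have := sq0 i; have := sq0 j; move=> /gt_eqF hj /gt_eqF hi.
  by field; rewrite hi hj.
pose f i : R := a * (i == u)%:R + b * (i == w)%:R.
have fz : forall i, i != u -> i != w -> f i = 0.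
  by move=> i /negbTE iu /negbTE iw; rewrite /f iu iw !mulr0 addr0.
have fu : f u = a by rewrite /f eqxx (negbTE uw) mulr0 addr0 mulr1.
have fw : f w = b by rewrite /f eqxx eq_sym (negbTE uw) mulr0 add0r mulr1.
pose y : 'rV[R]_n := \row_i (f i * sq i).
have y0 : y != 0.
  apply/negP => /eqP/rowP/(_ u); rewrite !mxE fu => /eqP.
  by rewrite mulf_eq0 (negbTE a0) (gt_eqF (sq0 u)).
have := @specR _ _ S (2^-1) y ST _ Hev y0; rewrite invr_ge0 ler0n => /(_ isT).
have -> : (y *m y^T) 0 0 = a ^+ 2 * d u + b ^+ 2 * d w.
  rewrite mxE (@sum2 _ _ _ _ _ uw); last by move=> i iu iw; rewrite !mxE fz // mul0r mul0r.
  by rewrite !mxE fu fw -!sqd; congr (_ + _); rewrite expr2; ring.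
suff -> : ((y *m S) *m (y *m S)^T) 0 0 =
  \sum_j (a * (e u j)%:R + b * (e w j)%:R) ^+ 2 / d j by [].
rewrite mxE; apply: eq_bigr => j _; rewrite [(_ ^T) j 0]mxE.
have -> : (y *m S) 0 j = (a * (e u j)%:R + b * (e w j)%:R) / sq j.
  rewrite mxE (@sum2 _ _ _ _ _ uw); last by move=> i iu iw; rewrite !mxE fz // !mul0r.
  rewrite !mxE fu fw.
  have := sq0 u; have := sq0 w; have := sq0 j; move=> /gt_eqF hj /gt_eqF hw /gt_eqF hu.
  by field; rewrite hj hw hu.
by rewrite -(sqd j) !expr2 mulf_div.
Qed.
Lemma sumb (R : realType) n (P : pred 'I_n) : \sum_j ((P j)%:R : R) = #|P|%:R.
Proof.
have hN : (\sum_j (P j : nat) = #|P|)%N.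
  by rewrite -sum1_card [RHS]big_mkcond; apply: eq_bigr => i _; rewrite unfold_in; case: (P i).
rewrite -hN natr_sum; apply: eq_bigr => i _; by case: (P i).
Qed.

Lemma deg1_eq n (e : rel 'I_n) u v j : deg e u = 1%N -> e u v -> e u j -> j = v.
Proof.
rewrite /deg => h euv euj; have [x hx] := cards1P (introT eqP h).
have : v \in [set w | e u w] by rewrite inE.
have : j \in [set w | e u w] by rewrite inE.
by rewrite hx !inE => /eqP -> /eqP ->.
Qed.

Lemma deg_pos n (e : rel 'I_n) : connected_graph e -> (2 <= n)%N ->
  forall j, (0 < deg e j)%N.
Proof.
move=> hc n2 j.
have h0 : (0 < n)%N by apply: leq_trans n2.
have h1 : (1 < n)%N by [].
pose i0 := Ordinal h0; pose i1 := Ordinal h1.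
pose k := if j == i0 then i1 else i0.
have kj : k != j.
  rewrite /k; case: (j =P i0) => [->|/eqP h]; last by rewrite eq_sym.
  by apply/eqP => /(congr1 val).
have /connectP [p pp kl] := hc j k.
case: p pp kl => [_ /= kj'|z p /= /andP [ejz _] _].
  by rewrite kj' eqxx in kj.
by rewrite /deg card_gt0; apply/set0Pn; exists z; rewrite inE.
Qed.

Lemma sum_cnt (R : realType) n (e : rel 'I_n) w v : e w v ->
  \sum_j (((e w j) && (j != v))%:R : R) = (deg e w - 1)%:R.
Proof.
move=> ewv; rewrite sumb; congr (_ %:R).
have := cardsD1 v [set j | e w j]; rewrite inE ewv /deg => ->.
rewrite add1n subn1 /=; apply: eq_card => j; rewrite !inE andbC.
done.
Qed.

Lemma sum_delta (R : realType) n (u : 'I_n) : \sum_j (((j == u))%:R : R) = 1.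
Proof. by rewrite sumb card1. Qed.
Lemma inv_le1 (R : realType) k : (0 < k)%N -> ((k%:R : R)^-1 <= 1).
Proof. by move=> k0; rewrite invr_le1 ?ler1n ?unitfE ?pnatr_eq0 -?lt0n ?ltr0n. Qed.

Lemma inv_le2 (R : realType) k : (2 <= k)%N -> ((k%:R : R)^-1 <= 2^-1).
Proof.
move=> k2; rewrite lef_pV2 ?posrE ?ltr0n ?ler_nat //.
by apply: leq_trans k2.
Qed.

Lemma case1 (R : realType) n (e : rel 'I_n) u v w : symmetric e ->
  (forall j, (0 < deg e j)%N) -> eps_gt e (2^-1 : R) -> u != w ->
  deg e u = 1%N -> deg e w = 1%N -> e u v -> e v w -> False.
Proof.
move=> es dp he uw du dw euv evw.
have ewv : e w v by rewrite es.
have ej : forall j, e u j = e w j.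
  move=> j; apply/idP/idP => h.
    by rewrite (@deg1_eq _ _ _ _ _ du euv h).
  by rewrite (@deg1_eq _ _ _ _ _ dw ewv h).
have := @key R n e u w 1 (-1) es dp he uw (oner_neq0 _).
rewrite big1; last by move=> j _; rewrite ej mul1r mulN1r subrr expr2 !mul0r.
rewrite du dw; lra.
Qed.

Lemma claimA (R : realType) n (e : rel 'I_n) x u v : symmetric e ->
  (forall j, (0 < deg e j)%N) -> eps_gt e (2^-1 : R) ->
  deg e x = 1%N -> deg e u = 2%N -> deg e v = 2%N -> e x u -> e u v -> x != v -> False.
Proof.
move=> es dp he dx du dv exu euv xv.
have evu : e v u by rewrite es.
have := @key R n e x v 2 (-1) es dp he xv ltac:(by rewrite pnatr_eq0).
move=> hk.
have hb : \sum_j (2 * (e x j)%:R + -1 * (e v j)%:R) ^+ 2 / (deg e j)%:R <=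
   \sum_j (((j == u)%:R : R) / 2 + ((e v j) && (j != u))%:R).
  apply: ler_sum => j _; case: (j =P u) => [->|/eqP ju].
    rewrite exu evu du /=; lra.
  have -> : e x j = false.
    by apply/negP => h; move: ju; rewrite (@deg1_eq _ _ _ _ _ dx exu h) eqxx.
  case: (e v j) => /=; last lra.
  have := @inv_le1 R _ (dp j); lra.
move: hk hb; rewrite big_split /= -mulr_suml sum_delta sum_cnt // dx dv.
rewrite subn1 /=; lra.
Qed.

Lemma caseB (R : realType) n (e : rel 'I_n) u v w : symmetric e ->
  (forall j, (0 < deg e j)%N) -> eps_gt e (2^-1 : R) ->
  deg e u = 2%N -> deg e v = 2%N -> deg e w = 2%N -> e u v -> e v w -> u != w ->
  False.
Proof.
move=> es dp he du dv dw euv evw uw.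
have ewv : e w v by rewrite es.
have d2 : forall j x, e j x -> deg e x = 2%N -> e x v -> j != v -> (2 <= deg e j)%N.
  move=> j x ejx dx exv jv; have := dp j; rewrite leq_eqVlt => /orP [/eqP h|//].
  by exfalso; apply: (@claimA R n e j x v es dp he (esym h) dx dv ejx exv jv).
have := @key R n e u w 1 (-1) es dp he uw (oner_neq0 _).
move=> hk.
have hb : \sum_j (1 * (e u j)%:R + -1 * (e w j)%:R) ^+ 2 / (deg e j)%:R <=
   \sum_j ((((e u j) && (j != v))%:R + ((e w j) && (j != v))%:R) / (2 : R)).
  apply: ler_sum => j _; case: (j =P v) => [->|/eqP jv].
    rewrite euv ewv /=; lra.
  rewrite /=.
  case hu: (e u j); case hw: (e w j) => /=; try lra.
    have := @inv_le2 R _ (d2 j u ltac:(by rewrite es hu) du euv jv); lra.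
  have := @inv_le2 R _ (d2 j w ltac:(by rewrite es hw) dw ewv jv); lra.
move: hk hb; rewrite -mulr_suml big_split /= !sum_cnt // du dw.
rewrite subn1 /=; lra.
Qed.
Theorem mainTheorem16 (R : realType) (n : nat) (e : rel 'I_n) :
  simple_graph e -> connected_graph e -> (3 <= n)%N ->
  eps_gt e (2^-1 : R) ->
  (forall u v w : 'I_n, u != w -> deg e u = 1%N -> deg e w = 1%N ->
     ~ (e u v /\ e v w)) /\
  (forall u v w : 'I_n, u != v -> v != w -> u != w -> e u v -> e v w ->
     ~ [/\ (deg e u == 1)%N || (deg e u == 2)%N,
           (deg e v == 1)%N || (deg e v == 2)%N &
           (deg e w == 1)%N || (deg e w == 2)%N]).
Proof.
move=> [es _] hc n3 he.
have dp := @deg_pos n e hc (ltnW n3).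
split.
  by move=> u v w uw du dw [euv evw]; apply: (@case1 R n e u v w).
move=> u v w uv vw uw euv evw [hu hv hw].
have dv : deg e v = 2%N.
  case/orP: hv => /eqP // dv; exfalso.
  have evu : e v u by rewrite es.
  by move: uw; rewrite (@deg1_eq _ _ _ _ _ dv evu evw) eqxx.
case/orP: hu => /eqP du; case/orP: hw => /eqP dw.
- exact: (@case1 R n e u v w es dp he uw du dw euv evw).
- exact: (@claimA R n e u v w es dp he du dv dw euv evw uw).
- apply: (@claimA R n e w v u es dp he dw dv du _ _ _).
  + by rewrite es.
  + by rewrite es.
  + by rewrite eq_sym.
- exact: (@caseB R n e u v w es dp he du dv dw euv evw uw).
Qed.
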